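(* Let $n\ge2$ be even and let $\mathcal{D}_{S_1},\mathcal{D}_{S_2}\subseteq\mathcal{D}_{[n]}\setminus\{n\}$. If $\mathrm{Spec}(\mathrm{ICG}(n,\mathcal{D}_{S_1}))=\mathrm{Spec}(\mathrm{ICG}(n,\mathcal{D}_{S_2}))$, then $n/2\notin\mathcal{D}_{S_1}\triangle\mathcal{D}_{S_2}$ (symmetric difference).
   Context: Identify $\mathbb{Z}_n$ with $[n]=\{1,\dots,n\}$. For a divisor $d$ of $n$, $G_n(d)=\{j\in[n]:\gcd(j,n)=d\}$; $\mathcal{D}_{[n]}$ is the set of positive divisors of $n$. For $\mathcal{D}\subseteq\mathcal{D}_{[n]}\setminus\{n\}$, $\mathrm{ICG}(n,\mathcal{D})=\mathrm{Cay}(\mathbb{Z}_n,S)$ with $S=\bigcup_{d\in\mathcal{D}}G_n(d)$, and $\mathcal{D}=\mathcal{D}_S$. $\mathrm{Spec}$ is the multiset of adjacency eigenvalues. *)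

(* Defs.v *)
From mathcomp Require Import all_boot all_order all_algebra all_field.
Set Implicit Arguments. Unset Strict Implicit. Unset Printing Implicit Defensive.
Import GRing.Theory Num.Theory.
Local Open Scope ring_scope.

(* Z_n is represented by 'I_n = {0,...,n-1}; the residue 0 stands for n in [n],
   and gcdn 0 n = n = gcdn n n, so the gcd-classes G_n(d) are unchanged. *)

Definition icg_conn (n : nat) (D : seq nat) (k : nat) : bool :=
  gcdn k n \in D.

Definition icg_adj (n : nat) (D : seq nat) : 'M[algC]_n :=
  \matrix_(i < n, j < n)
    (if icg_conn n D ((j + (n - i)) %% n)%N then 1 else 0).

Definition spec_mult (n : nat) (A : 'M[algC]_n) (lambda : algC) : nat :=
  mup lambda (char_poly A).

Definition same_spec (n : nat) (A B : 'M[algC]_n) : Prop :=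
  forall lambda : algC, spec_mult A lambda = spec_mult B lambda.

(* D is a set of divisors of n other than n (positive divisors, since 0 does not divide n >= 1). *)
Definition proper_divisor_set (n : nat) (D : seq nat) : bool :=
  all (fun d => (d %| n)%N && (d != n)) D.

Definition in_symdiff (x : nat) (A B : seq nat) : bool :=
  (x \in A) (+) (x \in B).

(* Main.v *)
Require Import Defs.
From mathcomp Require Import all_boot all_order all_algebra all_field.
From mathcomp Require Import zify.
Set Implicit Arguments. Unset Strict Implicit. Unset Printing Implicit Defensive.
Import Order.TTheory GRing.Theory Num.Theory.
Section P1.

Lemma gcdn_subl x n : x <= n -> gcdn (n - x) n = gcdn x n.
Proof.
move=> hx.
have e : n = (n - x) + x by lia.
by rewrite {2}e gcdnDl gcdnC {2}e gcdnDr.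
Qed.

Lemma modsub n i j : i < n -> j < n ->
  (j + (n - i)) %% n = if i <= j then j - i else j + n - i.
Proof.
move=> hi hj; case: ifP => hij.
  have -> : j + (n - i) = (j - i) + n by lia.
  by rewrite modnDr modn_small //; lia.
by rewrite modn_small; lia.
Qed.

Lemma gcd_sym n i j : i < n -> j < n ->
  gcdn ((j + (n - i)) %% n) n = gcdn ((i + (n - j)) %% n) n.
Proof.
move=> hi hj; rewrite !modsub //.
case: (ltngtP i j) => h.
- have -> : i + n - j = n - (j - i) by lia.
  by rewrite gcdn_subl //; lia.
- have -> : j + n - i = n - (i - j) by lia.
  by rewrite gcdn_subl //; lia.
- by subst.
Qed.

Definition bD n (D : seq nat) k : nat := icg_conn n D k.
Definition degD n (D : seq nat) : nat := \sum_(k < n) bD n D k.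

Lemma deg_odd n D : 2 <= n -> ~~ odd n -> n \notin D ->
  odd (degD n D) = (n %/ 2 \in D).
Proof.
move=> hn ev nD.
set m := n %/ 2.
have hnm : n = m + m by rewrite /m; move: ev; rewrite -dvdn2 => /dvdnP [q ->]; rewrite mulnK //; lia.
clearbody m.
have hm : 0 < m by lia.
have bsym : forall k, k <= n -> bD n D (n - k) = bD n D k.
  by move=> k hk; rewrite /bD /icg_conn gcdn_subl.
rewrite /degD -(big_mkord xpredT (bD n D)).
rewrite (big_cat_nat (n := m)) /=; [|lia|lia].
rewrite -{2}(add0n m) big_addn.

have -> : n - m = m by lia.
rewrite big_ltn // [in X in _ + X]big_ltn //.
have b0 : bD n D 0 = 0 by rewrite /bD /icg_conn gcd0n (negbTE nD).
rewrite b0 add0n add0n.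
have e2 : \sum_(1 <= i < m) bD n D (i + m) = \sum_(1 <= i < m) bD n D i.
  rewrite big_nat_rev /=; apply: eq_big_nat => i /andP [h1 h2].
  rewrite -bsym; last by lia.
  congr bD; lia.
rewrite e2 addnCA oddD addnn odd_double /= /bD.
have gm : gcdn m n = m by apply/gcdn_idPl; rewrite hnm dvdn_add.
by rewrite addbF /icg_conn gm; case: (m \in D).
Qed.
End P1.
Section P2.
Local Open Scope ring_scope.

Lemma adjE n D (i j : 'I_n) : icg_adj n D i j = (bD n D ((j + (n - i)) %% n))%:R.
Proof. by rewrite mxE /bD; case: icg_conn. Qed.

Lemma adj_sym n D (i j : 'I_n) : icg_adj n D i j = icg_adj n D j i.
Proof. by rewrite !adjE /bD /icg_conn gcd_sym. Qed.

Lemma colsum n D (j : 'I_n) : \sum_(i < n) icg_adj n D i j = (degD n D)%:R.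
Proof.
have n0 : (0 < n)%N by apply: leq_ltn_trans (leq0n j) (ltn_ord j).
pose f (i : 'I_n) : 'I_n := Ordinal (ltn_pmod (j + (n - i)) n0).
have finj : injective f.
  move=> i1 i2 /(congr1 val) /=; rewrite !modsub //.
  move=> h; apply/val_inj => /=; move: h.
  have := ltn_ord i1; have := ltn_ord i2; have := ltn_ord j.
  by case: (leqP i1 j); case: (leqP i2 j); lia.
rewrite /degD natr_sum [in RHS](reindex_inj finj); apply: eq_bigr => i _.
by rewrite adjE.
Qed.

Lemma rowsum n D (i : 'I_n) : \sum_(j < n) icg_adj n D i j = (degD n D)%:R.
Proof. by rewrite -(colsum D i); apply: eq_bigr => j _; rewrite adj_sym. Qed.

Lemma adj_ge0 n D (i j : 'I_n) : 0 <= icg_adj n D i j.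
Proof. by rewrite adjE ler0n. Qed.

Lemma eig_bound n D (v : 'rV[algC]_n) (a : algC) :
  v != 0 -> v *m icg_adj n D = a *: v -> `|a| <= (degD n D)%:R.
Proof.
move=> vnz hv.
set S := \sum_(j < n) `|v 0 j|.
have Sge0 : 0 <= S by apply: sumr_ge0 => j _.
have Snz : S != 0.
  apply/eqP => S0; apply: (negP vnz); apply/eqP/matrixP => x y.
  rewrite ord1 !mxE; apply: normr0_eq0.
  by apply: (psumr_eq0P (fun j _ => normr_ge0 (v 0 j)) S0).
have Spos : 0 < S by rewrite Order.POrderTheory.lt_def Snz Sge0.
have hj : forall j, `|a| * `|v 0 j| <= \sum_(i < n) `|v 0 i| * icg_adj n D i j.
  move=> j.
  have := congr1 (fun M : 'rV[algC]_n => M 0 j) hv; rewrite /= !mxE => e.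
  rewrite -normrM -e.
  apply: le_trans (ler_norm_sum _ _ _) _.
  apply: ler_sum => i _; rewrite normrM (ger0_norm (adj_ge0 _ _ _)) //.
have : `|a| * S <= (degD n D)%:R * S.
  rewrite /S mulr_sumr.
  apply: le_trans (ler_sum _ (fun j _ => hj j)) _.
  rewrite exchange_big /= mulr_sumr; apply: ler_sum => i _.
  by rewrite -mulr_sumr rowsum mulrC.
by rewrite ler_pM2r.
Qed.
End P2.
Section P3.
Local Open Scope ring_scope.

Lemma eig_deg n D : (0 < n)%N -> eigenvalue (icg_adj n D) (degD n D)%:R.
Proof.
move=> n0; apply/eigenvalueP; exists (const_mx 1).
  apply/matrixP => i j; rewrite !mxE.
  under eq_bigr do rewrite mxE mul1r.
  by rewrite colsum mulr1.
apply/eqP => /matrixP /(_ 0 (Ordinal n0)); rewrite !mxE => /eqP.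
by rewrite oner_eq0.
Qed.

Lemma deg_le n D1 D2 : (0 < n)%N -> same_spec (icg_adj n D1) (icg_adj n D2) ->
  (degD n D1 <= degD n D2)%N.
Proof.
move=> n0 hs.
have h1 := eig_deg D1 n0.
have : eigenvalue (icg_adj n D2) (degD n D1)%:R.
  move: h1; rewrite !eigenvalue_root_char -!dvdp_XsubCl -(expr1 ('X - _)).
  rewrite -!mup_geq ?monic_neq0 ?char_poly_monic //.
  by have := hs (degD n D1)%:R; rewrite /spec_mult => ->.
move/eigenvalueP => [v hv vnz].
have := eig_bound vnz hv.
by rewrite normr_nat ler_nat.
Qed.

End P3.

Theorem lemma3p8 (n : nat) (D1 D2 : seq nat) :
  (2 <= n)%N -> ~~ odd n ->
  proper_divisor_set n D1 -> proper_divisor_set n D2 ->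
  same_spec (icg_adj n D1) (icg_adj n D2) ->
  ~~ in_symdiff (n %/ 2) D1 D2.
Proof.
move=> hn ev p1 p2 hs.
have n0 : (0 < n)%N by lia.
have nD : forall D, proper_divisor_set n D -> n \notin D.
  move=> D /allP hD; apply/negP => /hD /andP [_]; by rewrite eqxx.
have e : degD n D1 = degD n D2.
  apply/eqP; rewrite eqn_leq deg_le //= deg_le //.
rewrite /in_symdiff -(deg_odd hn ev (nD _ p1)) -(deg_odd hn ev (nD _ p2)) e.
by rewrite addbb.
Qed.
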